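(* Let $\mathbb F$ be an algebraically closed field, and let $p_1,\dots,p_m\in\mathbb F[x]$ be polynomials such that $\{1,p_1,\dots,p_m\}$ is linearly independent over $\mathbb F$. Then the polynomial map $L:\mathbb F\to\mathbb F^m$, $x\mapsto(p_1(x),\dots,p_m(x))$, is $(m-1,1)$-elusive. In particular the moment curve $x\mapsto(x,x^2,\dots,x^m)$ is $(m-1,1)$-elusive.
   Context: A polynomial map $M=(M_1,\dots,M_m)$ has degree $d$ if each $M_i$ has degree at most $d$. $L:\mathbb F^n\to\mathbb F^m$ is $(r,d)$-elusive if for every polynomial map $M:\mathbb F^r\to\mathbb F^m$ of degree $d$, $\mathrm{im}(L)\not\subseteq\mathrm{im}(M)$. *)

(* Defs.v *)
From HB Require Import structures.
From mathcomp Require Import all_boot all_order all_algebra.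
Set Implicit Arguments. Unset Strict Implicit. Unset Printing Implicit Defensive.
Import Order.TTheory GRing.Theory.
Local Open Scope ring_scope.

Definition multiindex (r d : nat) := {ffun 'I_r -> 'I_d.+1}.

Definition mdeg (r d : nat) (a : multiindex r d) : nat := (\sum_i (a i : nat))%N.

Definition polyfun_deg (F : nzRingType) (r d : nat) (f : 'rV[F]_r -> F) : Prop :=
  exists c : multiindex r d -> F,
    forall y : 'rV[F]_r,
      f y = \sum_(a : multiindex r d | (mdeg a <= d)%N) c a * \prod_i (y 0 i) ^+ (a i).

Definition polymap_deg (F : nzRingType) (r m d : nat) (M : 'rV[F]_r -> 'rV[F]_m) : Prop :=
  forall j : 'I_m, polyfun_deg d (fun y => M y 0 j).

Definition elusive (F : nzRingType) (n m r d : nat) (L : 'rV[F]_n -> 'rV[F]_m) : Prop :=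
  forall M : 'rV[F]_r -> 'rV[F]_m, polymap_deg d M ->
    ~ (forall x : 'rV[F]_n, exists y : 'rV[F]_r, L x = M y).

Definition one_polys_lin_indep (F : fieldType) (m : nat) (p : 'I_m -> {poly F}) : Prop :=
  forall (c0 : F) (c : 'I_m -> F),
    c0%:P + \sum_(j < m) c j *: p j = 0 -> c0 = 0 /\ (forall j, c j = 0).

Definition polycurve (F : nzRingType) (m : nat) (p : 'I_m -> {poly F}) : 'rV[F]_1 -> 'rV[F]_m :=
  fun x => \row_(j < m) (p j).[x 0 0].

Definition moment_curve (F : nzRingType) (m : nat) : 'rV[F]_1 -> 'rV[F]_m :=
  fun x => \row_(j < m) (x 0 0) ^+ j.+1.

(* Main.v *)
Require Import Defs.
From HB Require Import structures.
From mathcomp Require Import all_boot all_order all_algebra.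
Import GRing.Theory.
Local Open Scope ring_scope.

Set Implicit Arguments. Unset Strict Implicit.

Lemma mono_aff (F : comNzRingType) (r : nat) (a : multiindex r 1) (y : 'rV[F]_r) :
  (mdeg a <= 1)%N ->
  \prod_i (y 0 i) ^+ (a i) = (mdeg a == 0)%N%:R + \sum_i y 0 i * (a i : nat)%:R.
Proof.
rewrite /mdeg leq_eqVlt ltnS leqn0; case/orP => /eqP H.
- have [k Hk] : exists k, (a k : nat) != 0%N.
    apply/existsP; apply: contraT; rewrite negb_exists => /forallP Hall.
    move: H; rewrite (eqP (_ : \sum_i (a i : nat) == 0)%N) //.
    by rewrite sum_nat_eq0; apply/forallP => i; have := Hall i; rewrite negbK.
  have ak1 : (a k : nat) = 1%N.
    by move: Hk (ltn_ord (a k)); case: (a k : nat) => [|[|]].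
  have other : forall i, i != k -> (a i : nat) = 0%N.
    move=> i ik; move: H; rewrite (bigD1 k) //= ak1 => /eqP.
    rewrite -[X in _ == X]addn0 eqn_add2l sum_nat_eq0 => /forallP /(_ i).
    by rewrite ik => /eqP.
  rewrite H /= (bigD1 k) //= ak1 big1 ?mulr1 => [|i ik]; last by rewrite other.
  rewrite (bigD1 k) //= ak1 big1 ?mulr1 ?add0r ?addr0 // => i ik.
  by rewrite other // mulr0.
- have Hall : forall i, (a i : nat) = 0%N.
    by move=> i; move: H => /eqP; rewrite sum_nat_eq0 => /forallP /(_ i) /eqP.
  rewrite H /= big1 => [|i _]; last by rewrite Hall.
  by rewrite big1 ?addr0 // => i _; rewrite Hall mulr0.
Qed.

Lemma aff_polyfun (F : comNzRingType) (r : nat) (f : 'rV[F]_r -> F) :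
  polyfun_deg 1 f -> exists v : F * 'rV[F]_r,
    forall y, f y = v.1 + \sum_i y 0 i * v.2 0 i.
Proof.
case=> c Hc.
exists (\sum_(a : multiindex r 1 | (mdeg a <= 1)%N) c a * (mdeg a == 0)%N%:R,
        \row_i \sum_(a : multiindex r 1 | (mdeg a <= 1)%N) c a * (a i : nat)%:R).
move=> y /=; rewrite Hc.
rewrite (eq_bigr (fun a => c a * (mdeg a == 0)%N%:R + \sum_i c a * (y 0 i * (a i : nat)%:R)));
  last by move=> a Ha; rewrite mono_aff // mulrDr mulr_sumr.
rewrite big_split /=; congr (_ + _).
rewrite exchange_big /=; apply: eq_bigr => i _.
by rewrite mxE mulr_sumr; apply: eq_bigr => a _; rewrite mulrCA.
Qed.

Lemma poly_allroot (F : closedFieldType) (q : {poly F}) :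
  (forall x, q.[x] = 0) -> q = 0.
Proof.
move=> H; apply/eqP; apply: contraT => /closed_nonrootP [x].
by rewrite /root H eqxx.
Qed.

Lemma main_lemma (F : closedFieldType) (m r : nat) (p : 'I_m -> {poly F}) :
  (r < m)%N -> one_polys_lin_indep p -> elusive r 1 (polycurve p).
Proof.
move=> rm Hind M HM Him.
have [g Hg] := fin_all_exists (fun j => aff_polyfun (HM j)).
pose A : 'M[F]_(r, m) := \matrix_(i, j) (g j).2 0 i.
pose K := kermx A^T.
have K0 : K != 0.
  rewrite -mxrank_eq0 mxrank_ker; have := rank_leq_col A^T.
  by move=> h; rewrite subn_eq0 -ltnNge; apply: leq_ltn_trans h rm.
have [i Ki] : exists i, row i K != 0.
  apply/existsP; apply: contraT; rewrite negb_exists => /forallP Hall.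
  move: K0; suff -> : K = 0 by rewrite eqxx.
  by apply/row_matrixP => i; rewrite row0; have := Hall i; rewrite negbK => /eqP.
set u := row i K in Ki.
have uA : u *m A^T = 0 by rewrite /u -row_mul mulmx_ker row0.
pose c0 := \sum_j u 0 j * (g j).1.
pose q := \sum_j u 0 j *: p j - c0%:P.
have q0 : q = 0.
  apply: poly_allroot => x.
  have [y Hy] := Him (const_mx x).
  rewrite /q hornerD hornerN hornerC horner_sum.
  apply/eqP; rewrite subr_eq0; apply/eqP.
  transitivity (\sum_j u 0 j * M y 0 j).
    apply: eq_bigr => j _; rewrite hornerZ -Hy /polycurve !mxE //.
  rewrite (eq_bigr (fun j => u 0 j * (g j).1 + \sum_i0 y 0 i0 * (u 0 j * A i0 j))); last first.
    move=> j _; rewrite Hg mulrDr mulr_sumr; congr (_ + _); apply: eq_bigr => k _.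
    by rewrite [A _ _]mxE mulrCA.
  rewrite big_split /= [X in _ + X]exchange_big /= [X in _ + X]big1 ?addr0 // => k _.
  rewrite -mulr_sumr.
  move/matrixP: uA => /(_ 0 k); rewrite !mxE.
  move=> e; rewrite (_ : \sum_(i0 < m) u 0 i0 * A k i0 = 0) ?mulr0 //.
  by rewrite -[RHS]e; apply: eq_bigr => j _; rewrite [A^T _ _]mxE.
have [_ Hc] : - c0 = 0 /\ (forall j, u 0 j = 0).
  by apply: Hind; rewrite polyCN addrC; exact: q0.
move: Ki; suff -> : u = 0 by rewrite eqxx.
by apply/rowP => j; rewrite Hc mxE.
Qed.

Lemma moment_indep (F : fieldType) (m : nat) :
  one_polys_lin_indep (fun j : 'I_m => ('X^(j.+1) : {poly F})).
Proof.
move=> c0 c H; split.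
  have := congr1 (fun q : {poly F} => q`_0) H.
  rewrite coefD coefC coef_sum coef0 /= big1 ?addr0 // => j _.
  by rewrite coefZ coefXn /= mulr0.
move=> j; have := congr1 (fun q : {poly F} => q`_(j.+1)) H.
rewrite coefD coefC coef_sum coef0 /= add0r (bigD1 j) //= big1 ?addr0.
  by rewrite coefZ coefXn eqxx mulr1.
move=> k kj; rewrite coefZ coefXn eqSS.
by rewrite (_ : (j == k :> nat) = false) ?mulr0 //; apply/negbTE; rewrite eq_sym.
Qed.

Theorem proposition9p5 (F : closedFieldType) (m : nat) (hm : (0 < m)%N) :
  (forall p : 'I_m -> {poly F},
      one_polys_lin_indep p -> elusive (m.-1) 1 (polycurve p))
  /\ elusive (m.-1) 1 (@moment_curve F m).
Proof.
have rm : (m.-1 < m)%N by rewrite prednK.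
split; first by move=> p Hp; exact: main_lemma.
move=> M HM Him.
apply: (main_lemma rm (@moment_indep F m) HM) => x.
have [y Hy] := Him x; exists y; rewrite -Hy.
by apply/rowP => j; rewrite !mxE hornerXn.
Qed.
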